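(* Let $a:\mathbb{R}^n\to\mathbb{R}^m$ be differentiable with each component $a_i$ convex, and let $w\in\mathbb{R}^m$, $w\ge0$. Let $(x,s,y)$ be a point with $s,y\ge0$, $y^Ta(x)>0$ and $\Gamma_{\mathrm{far}}(x,y)\le1/(2R)$ for some $R\in(0,\infty)$, and suppose some minimizer $(\mu^*,x^* )$ (with corresponding $s^*$) of the problem $\min_{x,s,\mu}\mu$ subject to $a(x)+s=\mu w$, $s\ge0$, $\mu\ge0$ satisfies $\|x-x^*\|_\infty\le R$. Then the system $a(x)\le0$ has no solution $x\in\mathbb{R}^n$.
   Context: $\Gamma_{\mathrm{far}}(x,y)=\dfrac{\|\nabla a(x)^Ty\|_1}{a(x)^Ty}$, where $\nabla a(x)$ is the $m\times n$ Jacobian of $a$ at $x$. *)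

(* Defs.v *)
From HB Require Import structures.
From mathcomp Require Import all_boot all_order all_algebra.
From mathcomp Require Import all_classical all_reals all_analysis.
Set Implicit Arguments. Unset Strict Implicit. Unset Printing Implicit Defensive.
Import Order.TTheory GRing.Theory Num.Theory numFieldNormedType.Exports.
Local Open Scope classical_set_scope.
Local Open Scope ring_scope.

Definition vnonneg (R : realType) k (v : 'rV[R]_k) : Prop := forall i, 0 <= v 0 i.

Definition norm1 (R : realType) k (v : 'rV[R]_k) : R := \sum_(i < k) `|v 0 i|.
Definition norminf (R : realType) k (v : 'rV[R]_k) : R := \big[Num.max/0]_(i < k) `|v 0 i|.

Definition dotv (R : realType) k (u v : 'rV[R]_k) : R := \sum_(i < k) u 0 i * v 0 i.

(* MathComp's jacobian 'J a x is the n x m matrix with 'd a x v = v *m 'J a x,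
   i.e. the transpose of the paper's m x n Jacobian; hence
   grad a(x)^T y (a column n-vector) is (('J a x) *m y^T), here as a row: y *m ('J a x)^T. *)
Definition Gamma_far (R : realType) n m (a : 'rV[R]_n -> 'rV[R]_m)
  (x : 'rV[R]_n) (y : 'rV[R]_m) : R :=
  norm1 (y *m (jacobian a x)^T) / dotv y (a x).

Definition feasible (R : realType) n m (a : 'rV[R]_n -> 'rV[R]_m) (w : 'rV[R]_m)
  (mu : R) (x : 'rV[R]_n) (s : 'rV[R]_m) : Prop :=
  a x + s = mu *: w /\ vnonneg s /\ 0 <= mu.

Definition is_minimizer (R : realType) n m (a : 'rV[R]_n -> 'rV[R]_m) (w : 'rV[R]_m)
  (mu : R) (x : 'rV[R]_n) (s : 'rV[R]_m) : Prop :=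
  feasible a w mu x s /\
  forall mu' x' s', feasible a w mu' x' s' -> mu <= mu'.

(* Main.v *)
Require Import Defs.
From HB Require Import structures.
From mathcomp Require Import all_boot all_order all_algebra.
From mathcomp Require Import all_classical all_reals all_analysis.
From mathcomp Require Import ring lra.
Import Order.TTheory GRing.Theory Num.Theory numFieldNormedType.Exports.
Local Open Scope classical_set_scope.
Local Open Scope ring_scope.

Lemma cvg_sum_seq (R : realType) (T : Type) (F : set_system T) {FF : Filter F}
  (I : Type) (r : seq I) (G : I -> T -> R) (L : I -> R) :
  (forall i, G i @ F --> L i) ->
  (fun t => \sum_(i <- r) G i t) @ F --> \sum_(i <- r) L i.
Proof.
move=> HG; elim: r => [|i r IH].
  under eq_fun do rewrite big_nil. rewrite big_nil; exact: cvg_cst.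
under eq_fun do rewrite big_cons. rewrite big_cons.
exact: cvgD.
Qed.

Lemma grad_ineq (R : realType) n m (a : 'rV[R]_n -> 'rV[R]_m) (y : 'rV[R]_m)
  (x xs : 'rV[R]_n) :
  differentiable a x -> (forall i : 'I_m, convex_function setT (fun z : 'rV[R]_n => a z 0 i)) ->
  vnonneg y ->
  dotv y ((xs - x) *m 'J a x) <= dotv y (a xs) - dotv y (a x).
Proof.
move=> da cvx y0.
set v := xs - x.
have der : derivable a x v := diff_derivable da.
rewrite -deriveEjacobian //.
set D := 'D_v a x.
set F := fun h : R => h^-1 *: ((a \o shift x) (h *: v) - a x).
have FD : F @ 0^' --> D := der.
have FD' : F @ 0^'+ --> D := cvg_dnbhs_at_right FD.
have HG : (fun h => \sum_(i < m) y 0 i * F h 0 i) @ 0^'+ --> dotv y D.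
  apply: cvg_sum_seq => i.
  apply: cvgM; first exact: cvg_cst.
  apply: (@continuous_cvg _ _ _ _ _ F (fun M : 'rV[R]_m => M 0 i) D); [exact: coord_continuous | exact: FD'].
apply: (cvgr_to_le HG).
near=> h.
have h0 : 0 < h by near: h; exact: nbhs_right_gt.
have h1 : h < 1 by near: h; exact: nbhs_right_lt.
rewrite /dotv -sumrB; apply: ler_sum => i _.
rewrite -mulrBr; apply: ler_wpM2l; first exact: y0.
rewrite /F /= mxE [X in X <= _]mulrC -ler_pdivlMr ?invr_gt0 // invrK.
have := cvx i (Itv01 (ltW h0) (ltW h1)) xs x.
rewrite !inE /= => /(_ I I).
move=> H.
have H' : a (h *: xs + (1 - h) *: x) 0 i <= h * a xs 0 i + (1 - h) * a x 0 i := H.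
have -> : h *: v + x = h *: xs + (1 - h) *: x.
  by apply/rowP => j; rewrite /v !mxE; lra.
rewrite mxE mxE.
lra.
Unshelve. all: by end_near.
Qed.

Lemma le_norminf (R : realType) k (v : 'rV[R]_k) j : `|v 0 j| <= norminf v.
Proof. by rewrite /norminf (bigD1 j) //= le_max lexx. Qed.

Lemma dot_bound (R : realType) n m (y : 'rV[R]_m) (v : 'rV[R]_n) (J : 'M[R]_(n, m)) :
  - (norm1 (y *m J^T) * norminf v) <= dotv y (v *m J).
Proof.
have -> : dotv y (v *m J) = \sum_(j < n) v 0 j * (y *m J^T) 0 j.
  rewrite /dotv.
  under eq_bigr do rewrite mxE big_distrr /=.
  rewrite exchange_big /=; apply: eq_bigr => j _.
  rewrite mxE big_distrr /=; apply: eq_bigr => i _; rewrite mxE; ring.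
rewrite /norm1 mulr_suml -sumrN; apply: ler_sum => j _.
have h1 := @le_norminf _ _ v j.
have h2 : 0 <= `|(y *m J^T) 0 j| by [].
apply: (@le_trans _ _ (- (`|(y *m J^T) 0 j| * `|v 0 j|))).
  by rewrite lerN2; apply: ler_wpM2l.
by apply: lerNnormlW; rewrite normrM mulrC.
Qed.

Theorem mainTheorem8 (R : realType) (n m : nat) (a : 'rV[R]_n -> 'rV[R]_m)
  (w : 'rV[R]_m) (x : 'rV[R]_n) (s y : 'rV[R]_m) (Rad : R) :
  (forall z, differentiable a z) ->
  (forall i : 'I_m, convex_function setT (fun z : 'rV[R]_n => a z 0 i)) ->
  vnonneg w ->
  vnonneg s -> vnonneg y ->
  0 < dotv y (a x) ->
  0 < Rad ->
  Gamma_far a x y <= 1 / (2 * Rad) ->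
  (exists (mu_star : R) (x_star : 'rV[R]_n) (s_star : 'rV[R]_m),
      is_minimizer a w mu_star x_star s_star /\ norminf (x - x_star) <= Rad) ->
  ~ (exists z : 'rV[R]_n, forall i : 'I_m, a z 0 i <= 0).
Proof.
move=> da cvx w0 s0 y0 gpos R0 Gam [mu [xs [ss [[feas minz] Hn]]]] [z Hz].
have mule0 : mu <= 0.
  apply: (minz 0 z (- a z)); split; first by rewrite subrr scale0r.
  by split => // i; rewrite mxE oppr_ge0.
have mu0 : mu = 0 by case: feas => _ [_ h]; apply/le_anti; rewrite mule0 h.
have axs : forall i, a xs 0 i <= 0.
  case: feas => e [hs _] i; move: e; rewrite mu0 scale0r => /(congr1 (fun M : 'rV[R]_m => M 0 i)).
  rewrite !mxE => e; have := hs i; lra.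
have gxs : dotv y (a xs) <= 0.
  rewrite /dotv -oppr_ge0 -sumrN; apply: sumr_ge0 => i _.
  rewrite -mulrN; apply: mulr_ge0; first exact: y0.
  by rewrite oppr_ge0.
have G := @grad_ineq _ _ _ a y x xs (da x) cvx y0.
have B := @dot_bound _ _ _ y (xs - x) ('J a x).
have Hv : norminf (xs - x) <= Rad.
  suff -> : norminf (xs - x) = norminf (x - xs) by [].
  by rewrite /norminf; apply: eq_bigr => j _; rewrite !mxE distrC.
set g := dotv y (a x) in gpos G Gam.
set N := norm1 (y *m ('J a x)^T) in B Gam.
set V := norminf (xs - x) in B Hv.
have N0 : 0 <= N by apply: sumr_ge0 => i _.
rewrite /Gamma_far -/g -/N ler_pdivrMr // in Gam.
have NR : N * Rad <= g / 2.
  have : N * Rad <= 1 / (2 * Rad) * g * Rad by rewrite ler_wpM2r // ltW.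
  have -> : 1 / (2 * Rad) * g * Rad = g / 2 by field; rewrite gt_eqF.
  done.
have NV : N * V <= N * Rad by rewrite ler_wpM2l.
lra.
Qed.
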